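(* Let $\vec{G}$ be a DDMOG of order $n$, let $g$ be a DDM labeling of $\vec{G}$, and let $u\in V(\vec{G})$ satisfy $g(u)=n$. Let $\vec{H}$ be a DDMOG of order $m$, let $h$ be a DDM labeling of $\vec{H}$, and let $w\in V(\vec{H})$ satisfy $h(w)=1$. If $\vec{H}$ is balanced, then the vertex coalescence $\vec{K}=\vec{G}\cdot_{uw}\vec{H}$ is a DDMOG on $n+m-1$ vertices.
   Context: An oriented graph is a finite digraph without loops such that whenever $(u,v)$ is an arc, $(v,u)$ is not. For a vertex $v$, $N^+(v)=\{x:(x,v)\text{ is an arc}\}$, $N^-(v)=\{x:(v,x)\text{ is an arc}\}$, $imb(v)=|N^+(v)|-|N^-(v)|$; the oriented graph is balanced if $imb(v)=0$ for all $v$. For a labeling $f$, $wt_f(v)=\sum_{x\in N^+(v)}f(x)-\sum_{x\in N^-(v)}f(x)$. A DDM labeling of an oriented graph on $n$ vertices is a bijection $f:V\to\{1,\dots,n\}$ with $wt_f(v)=0$ for all $v$; a DDMOG is an oriented graph admitting a DDM labeling. For a vertex $u$ of $\vec{G_1}$ and a vertex $v$ of $\vec{G_2}$ (vertex-disjoint oriented graphs), the vertex coalescence $\vec{G_1}\cdot_{uv}\vec{G_2}$ is obtained from the disjoint union $\vec{G_1}\cup\vec{G_2}$ by adding the arc $(u,x)$ for every arc $(v,x)$ of $\vec{G_2}$, adding the arc $(x,u)$ for every arc $(x,v)$ of $\vec{G_2}$, and then deleting $v$. *)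

(* Defs.v *)
From mathcomp Require Import all_boot all_order all_algebra.
Set Implicit Arguments. Unset Strict Implicit. Unset Printing Implicit Defensive.
Import GRing.Theory Num.Theory.

(* An oriented graph on the finite vertex type V is given by its arc relation
   [a]: [a x y] means (x,y) is an arc. *)
Definition oriented (V : finType) (a : rel V) : Prop :=
  (forall x, ~~ a x x) /\ (forall x y, a x y -> ~~ a y x).

Definition imb (V : finType) (a : rel V) (v : V) : int :=
  (#|[set x | a x v]|%:Z - #|[set x | a v x]|%:Z)%R.

Definition balanced (V : finType) (a : rel V) : Prop :=
  forall v, imb a v = 0%R.

Definition wt (V : finType) (a : rel V) (f : V -> nat) (v : V) : int :=
  (\sum_(x | a x v) (f x)%:Z - \sum_(x | a v x) (f x)%:Z)%R.

Definition DDM_labeling (V : finType) (a : rel V) (f : V -> nat) : Prop :=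
  [/\ injective f, (forall v, 1 <= f v <= #|V|)%N & forall v, wt a f v = 0%R].

Definition DDMOG (V : finType) (a : rel V) : Prop :=
  oriented a /\ exists f : V -> nat, DDM_labeling a f.

Definition coal_vertex (V1 V2 : finType) (v : V2) : finType :=
  (V1 + {x : V2 | x != v})%type.

Definition coal_arc (V1 V2 : finType) (a1 : rel V1) (a2 : rel V2)
  (u : V1) (v : V2) : rel (@coal_vertex V1 V2 v) :=
  fun p q =>
    match p, q with
    | inl x, inl y => a1 x y
    | inr x, inr y => a2 (val x) (val y)
    | inl x, inr y => (x == u) && a2 v (val y)
    | inr x, inl y => (y == u) && a2 (val x) v
    end.
Arguments coal_vertex V1 [V2] v.
Arguments coal_arc [V1 V2] a1 a2 u v _ _.

(* Main.v *)
Require Import Defs.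
From mathcomp Require Import all_boot all_order all_algebra.
From mathcomp Require Import ring zify.
Import GRing.Theory Num.Theory.
Section Aux.
Local Open Scope ring_scope.

Lemma sum_sig (V : finType) (w : V) (P : pred V) (F : V -> int) :
  (\sum_(z : {x : V | x != w} | P (val z)) F (val z) = \sum_(x | (x != w) && P x) F x)%R.
Proof.
symmetry; rewrite (reindex_omap (val : {x : V | x != w} -> V) insub); last first.
  by move=> i /andP[iA Pi]; rewrite insubT.
by apply: eq_bigl=> -[i iA]/=; rewrite insubT ?iA /= eqxx andbT.
Qed.

Lemma sum_split_w (V : finType) (w : V) (P : pred V) (F : V -> int) :
  (\sum_(x | P x) F x = (if P w then F w else 0) + \sum_(x | (x != w) && P x) F x)%R.
Proof.
case Pw: (P w).
  by rewrite (bigD1 w) //; congr (_ + _); apply: eq_bigl => x; rewrite andbC.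
rewrite GRing.add0r; apply: eq_bigl => x; case: eqP => [->|] //=; by rewrite Pw.
Qed.

Lemma sum_pred1b (V : finType) (u : V) (b : bool) (F : V -> int) :
  (\sum_(x | (x == u) && b) F x = if b then F u else 0)%R.
Proof.
case: b.
  by rewrite (eq_bigl (fun x => x == u)) ?big_pred1_eq // => x; rewrite andbT.
by rewrite big_pred0 // => x; rewrite andbF.
Qed.

Lemma sum_shift (V : finType) (P : pred V) (h : V -> nat) (c : nat) :
  (\sum_(x | P x) ((h x + c)%N)%:Z = \sum_(x | P x) (h x)%:Z + c%:Z * #|[set x | P x]|%:Z)%R.
Proof.
rewrite (eq_bigr (fun x => (h x)%:Z + c%:Z)) => [|x _]; last by rewrite PoszD.
rewrite big_split /= cardsE; congr (_ + _).
by rewrite sumr_const -mulr_natr natz.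
Qed.

Lemma key (A B I O c' : int) : A - B = 0 -> I - O = 0 ->
      (A + c' * I) - (B + c' * O) = 0.
Proof.
move=> h1 h2.
have -> : A + c' * I - (B + c' * O) = (A - B) + c' * (I - O) by ring.
by rewrite h1 h2 mulr0 addr0.
Qed.
Lemma key2 (G G' A B I O c' : int) : I - O = 0 -> A - B = 0 -> G - G' = 0 ->
      (G + (A + c' * I)) - (G' + (B + c' * O)) = 0.
Proof.
move=> h1 h2 h3.
have -> : (G + (A + c' * I)) - (G' + (B + c' * O)) = (G - G') + (A - B) + c' * (I - O) by ring.
by rewrite h1 h2 h3 mulr0 !addr0.
Qed.
End Aux.

Theorem theorem2 (V1 V2 : finType) (a1 : rel V1) (a2 : rel V2)
  (g : V1 -> nat) (h : V2 -> nat) (u : V1) (w : V2) :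
  oriented a1 -> DDM_labeling a1 g -> g u = #|V1| ->
  oriented a2 -> DDM_labeling a2 h -> h w = 1 ->
  balanced a2 ->
  DDMOG (coal_arc a1 a2 u w) /\ #|{: coal_vertex V1 w}| = (#|V1| + #|V2| - 1)%N.
Proof.
move=> [irr1 as1] [ginj grng gwt] gu [irr2 as2] [hinj hrng hwt] hw bal.
have n1 : (1 <= #|V1|)%N by rewrite -gu; case/andP: (grng u).
have m1 : (1 <= #|V2|)%N by rewrite -hw; case/andP: (hrng w).
set c := (#|V1| - 1)%N.
have hc : forall y : V2, y != w -> (2 <= h y)%N.
  move=> y yw; case/andP: (hrng y) => h1 _.
  have : h y != h w by apply: contra yw => /eqP/hinj ->.
  rewrite hw; lia.
have cardK : #|{: coal_vertex V1 w}| = (#|V1| + #|V2| - 1)%N.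
  rewrite /coal_vertex card_sum card_sig.
  have := cardC1 w.
  have -> : #|[pred x | x != w]| = #|(predC1 w)| by apply: eq_card.
  move=> ->; rewrite -subn1; lia.
split=> //; split.
  split.
    by case=> [x|y] /=; rewrite ?irr1 ?irr2 ?andbF.
  case=> [x|y] [x'|y'] /=.
  - exact: as1.
  - by case/andP=> -> /as2 /negbTE ->.
  - by case/andP=> -> /as2 /negbTE ->.
  - exact: as2.
pose f (p : coal_vertex V1 w) : nat :=
  match p with inl x => g x | inr y => (h (val y) + c)%N end.
exists f; split.
- case=> [x|[y yw]] [x'|[y' yw']] /=.
  + by move/ginj => ->.
  + move=> e; have := hc _ yw'; case/andP: (grng x) => _; lia.
  + move=> e; have := hc _ yw; case/andP: (grng x') => _; lia.
  + move=> e; congr inr; apply: val_inj; apply: hinj => /=; lia.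
- rewrite cardK; case=> [x|[y yw]] /=.
  + case/andP: (grng x) => p1 p2; move: n1 m1 p1 p2; set N := #|V1|; set M := #|V2|; lia.
  + case/andP: (hrng y) => p1 p2; move: n1 m1 p1 p2; rewrite /c; set N := #|V1|; set M := #|V2|; lia.
- have guE : (Posz (g u) = Posz (h w + c))%R by rewrite gu hw /c subnKC.
  case=> [x|[y yw]]; rewrite /wt !big_sumType /=.
  + case: (eqVneq x u) => [->|xu].
    * rewrite (sum_sig _ w (fun z => true && a2 z w) (fun z => Posz (h z + c))).
      rewrite (sum_sig _ w (fun z => true && a2 w z) (fun z => Posz (h z + c))).
      have e1 := sum_split_w _ w (fun z => true && a2 z w) (fun z => Posz (h z + c)).
      have e2 := sum_split_w _ w (fun z => true && a2 w z) (fun z => Posz (h z + c)).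
      rewrite /= (negbTE (irr2 w)) /= GRing.add0r in e1.
      rewrite /= (negbTE (irr2 w)) /= GRing.add0r in e2.
      rewrite -e1 -e2 !sum_shift.
      have := gwt u; have := hwt w; have := bal w; rewrite /wt /imb.
      move=> e1' e2' e3'; exact: key2 e1' e2' e3'.
    * rewrite [X in (_ + X - _)%R]big_pred0; last by move=> ?.
      rewrite [X in (_ - (_ + X))%R]big_pred0; last by move=> ?.
      rewrite !GRing.addr0; exact: gwt.
  + rewrite !(sum_pred1b _ u _ (fun i => Posz (g i))).
    rewrite (sum_sig _ w (fun z => a2 z y) (fun z => Posz (h z + c))).
    rewrite (sum_sig _ w (fun z => a2 y z) (fun z => Posz (h z + c))).
    rewrite guE -!sum_split_w !sum_shift.
    have := hwt y; have := bal y; rewrite /wt /imb.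
    move=> e1 e2; exact: key e2 e1.
Qed.
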